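(* Let $n\ge1$, $0<\epsilon\le n+1$, $\beta=0.414213$, $\eta=\beta/\sqrt{n+1}$, $\gamma=1-\eta$, and $$\mathcal N=\left\lceil\frac{\log\!\big(\frac{n+1}{\epsilon}\big)}{-\log\!\big(1-\frac{0.414213}{\sqrt{n+1}}\big)}\right\rceil.$$ Run Algorithm A for $\mathcal N$ iterations. Then for every $k=0,1,\dots,\mathcal N$ the iterates are well defined, $\bar x^k>0$, $\bar s^k>0$, $\|\bar x^k\odot\bar s^k-\bar\mu^k e\|\le\beta\bar\mu^k$, and $$\bar r^k=(1-\eta)^k\bar r^0,\qquad (\bar x^k)^\top\bar s^k=(1-\eta)^k(n+1).$$ In particular, after exactly $\mathcal N$ iterations, $\|\bar r^{\mathcal N}\|\le\epsilon$ and $(\bar x^{\mathcal N})^\top\bar s^{\mathcal N}\le\epsilon$, i.e. $(\bar x^{\mathcal N},\bar s^{\mathcal N})$ is an $\epsilon$-approximate maximal complementary solution of the homogeneous LCP.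
   Context: Let $Q\in\mathbb{R}^{n_z\times n_z}$ be symmetric positive semidefinite, $c\in\mathbb{R}^{n_z}$, $A\in\mathbb{R}^{n_b\times n_z}$, $b\in\mathbb{R}^{n_b}$, and $n=n_z+n_b$. Define $M=\begin{bmatrix}Q&-A^\top\\ A&0\end{bmatrix}$ and $q=\begin{bmatrix}c\\-b\end{bmatrix}$. For a matrix $M'$ and vector $q'$ and $\bar x=(x,\tau)\in\mathbb{R}^{n+1}_{++}$, write $\psi(\bar x)=\begin{bmatrix} M'x+q'\tau\\ -x^\top M'x/\tau-x^\top q'\end{bmatrix}$ with Jacobian $\nabla\psi(\bar x)=\begin{bmatrix} M' & q'\\ -x^\top(M'+M'^\top)/\tau-q'^\top & x^\top M'x/\tau^2\end{bmatrix}$. $\odot$ is componentwise product, $e$ the all-ones vector, $\|\cdot\|$ the Euclidean norm. Algorithm A: (1) Let $\sigma=\max\{1,\max_i(Me+q)_i,-e^\top Me-e^\top q\}$ and set $M'=M/\sigma$, $q'=q/\sigma$ (used in $\psi$ henceforth). (2) Set $\bar x^0=e\in\mathbb{R}^{n+1}$, $\bar s^0=e\in\mathbb{R}^{n+1}$. (3) For $k=0,1,\dots$: set $\bar r^k=\bar s^k-\psi(\bar x^k)$, $\bar\mu^k=(\bar x^k)^\top\bar s^k/(n+1)$; compute $(d_{\bar x},d_{\bar s})$ solving $d_{\bar s}-\nabla\psi(\bar x^k)d_{\bar x}=-\eta\bar r^k$ and $\bar x^k\odot d_{\bar s}+\bar s^k\odot d_{\bar x}=\gamma\bar\mu^k e-\bar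 x^k\odot\bar s^k$; set $\bar x^{k+1}=\bar x^k+d_{\bar x}$ and $\bar s^{k+1}=\psi(\bar x^{k+1})+\gamma\bar r^k$. An $\epsilon$-approximate maximal complementary solution means $\bar x,\bar s>0$ with $\|\bar s-\psi(\bar x)\|\le\epsilon$ and $\bar x^\top\bar s\le\epsilon$. *)

(* Defs.v *)
From HB Require Import structures.
From mathcomp Require Import all_boot all_order all_algebra.
From mathcomp Require Import reals exp.
Set Implicit Arguments. Unset Strict Implicit. Unset Printing Implicit Defensive.
Import Order.TTheory GRing.Theory Num.Theory.
Local Open Scope ring_scope.

Section AlgA.
Variables (R : realType) (nz nb : nat).
Local Notation nn := (nz + nb)%N.
Local Notation vec := 'cV[R]_(nn + 1).

Definition onesv (m : nat) : 'cV[R]_m := const_mx 1.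
Definition hadam (m : nat) (u v : 'cV[R]_m) : 'cV[R]_m := \col_i (u i 0 * v i 0).
Definition dotv (m : nat) (u v : 'cV[R]_m) : R := \sum_i u i 0 * v i 0.
Definition enorm (m : nat) (u : 'cV[R]_m) : R := Num.sqrt (\sum_i u i 0 ^+ 2).
Definition posv (m : nat) (u : 'cV[R]_m) : Prop := forall i, 0 < u i 0.
Definition diagc (m : nat) (u : 'cV[R]_m) : 'M[R]_m := diag_mx u^T.

Variables (Q : 'M[R]_nz) (c : 'cV[R]_nz) (A : 'M[R]_(nb, nz)) (b : 'cV[R]_nb).
Variables (eta gamma : R).

Definition Mmat : 'M[R]_nn := block_mx Q (- A^T) A 0.
Definition qvec : 'cV[R]_nn := col_mx c (- b).

Definition sigma : R :=
  Num.max (Num.max 1 (\big[Num.max/0]_i ((Mmat *m onesv nn + qvec) i 0)))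
          (- dotv (onesv nn) (Mmat *m onesv nn) - dotv (onesv nn) qvec).
Definition Mp : 'M[R]_nn := sigma^-1 *: Mmat.
Definition qp : 'cV[R]_nn := sigma^-1 *: qvec.

Definition xpart (xb : vec) : 'cV[R]_nn := usubmx xb.
Definition tau (xb : vec) : R := dsubmx xb 0 0.

Definition psi (xb : vec) : vec :=
  let x := xpart xb in let t := tau xb in
  col_mx (Mp *m x + t *: qp)
         (const_mx (- ((x^T *m Mp *m x) 0 0) / t - (x^T *m qp) 0 0)).

Definition jac_psi (xb : vec) : 'M[R]_(nn + 1) :=
  let x := xpart xb in let t := tau xb in
  block_mx Mp qp
    (- (t^-1 *: (x^T *m (Mp + Mp^T))) - qp^T)
    (const_mx (((x^T *m Mp *m x) 0 0) / t ^+ 2)).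

Definition resid (xb sb : vec) : vec := sb - psi xb.
Definition mu (xb sb : vec) : R := dotv xb sb / (nn + 1)%:R.

Definition newton_mat (xb sb : vec) : 'M[R]_((nn + 1) + (nn + 1)) :=
  block_mx (- jac_psi xb) 1%:M (diagc sb) (diagc xb).
Definition newton_rhs (xb sb : vec) : 'cV[R]_((nn + 1) + (nn + 1)) :=
  col_mx (- (eta *: resid xb sb))
         (gamma * mu xb sb *: onesv (nn + 1) - hadam xb sb).
Definition newton_sol (xb sb : vec) := invmx (newton_mat xb sb) *m newton_rhs xb sb.
Definition dxb (xb sb : vec) : vec := usubmx (newton_sol xb sb).

Definition stepA (p : vec * vec) : vec * vec :=
  let xb := p.1 in let sb := p.2 in
  let xn := xb + dxb xb sb in
  (xn, psi xn + gamma *: resid xb sb).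

Definition iterA (k : nat) : vec * vec := iter k stepA (onesv (nn + 1), onesv (nn + 1)).
Definition xk (k : nat) : vec := (iterA k).1.
Definition sk (k : nat) : vec := (iterA k).2.
Definition rk (k : nat) : vec := resid (xk k) (sk k).
Definition muk (k : nat) : R := mu (xk k) (sk k).

End AlgA.

Definition betaA {R : realType} : R := 414213%:R / 1000000%:R.

Definition Niter {R : realType} (n : nat) (eps : R) : nat :=
  `| Num.ceil (ln ((n + 1)%:R / eps) / (- ln (1 - betaA / Num.sqrt (n + 1)%:R))) |%N.

(* Main.v *)
Require Import Defs.
From HB Require Import structures.
From mathcomp Require Import all_boot all_order all_algebra.
From mathcomp Require Import reals exp.
From mathcomp Require Import ring lra.
Import Order.TTheory GRing.Theory Num.Theory.
Local Open Scope ring_scope.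

Section Scal.
Context {R : realFieldType}.

Definition posp (x : R) := if 0 <= x then x else 0.

Lemma posp_ge0 x : 0 <= posp x.
Proof. by rewrite /posp; case: ifP. Qed.

Lemma posp_ge x : x <= posp x.
Proof. rewrite /posp; case: ifP => // /negbT; rewrite -ltNge => h; exact: ltW. Qed.

Lemma posp_sq x : x ^+ 2 = posp x ^+ 2 + posp (- x) ^+ 2.
Proof.
rewrite /posp oppr_ge0; have [h|h] := lerP 0 x.
  case: (lerP x 0) => h2; last by rewrite expr0n addr0.
  have -> : x = 0 by apply/eqP; rewrite eq_le h h2.
  by rewrite oppr0 expr0n addr0.
by rewrite (ltW h) expr0n add0r sqrrN.
Qed.

Lemma posp_split x : x = posp x - posp (- x).
Proof.
rewrite /posp oppr_ge0; have [h|h] := lerP 0 x.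
  case: (lerP x 0) => h2; last by rewrite subr0.
  have -> : x = 0 by apply/eqP; rewrite eq_le h h2.
  by rewrite oppr0 subr0.
by rewrite (ltW h) add0r opprK.
Qed.

Lemma posp_le x y : x <= posp y -> posp x <= posp y.
Proof. by move=> h; rewrite {1}/posp; case: ifP => // _; apply: posp_ge0. Qed.

Lemma posp_le2 x y : x <= y -> 0 <= y -> posp x <= y.
Proof. by move=> h h0; rewrite /posp; case: ifP. Qed.

Lemma sq_low (p mu b : R) : 0 <= b -> 0 < mu ->
  (p - mu)^+2 <= b^+2 * mu^+2 -> (1 - b) * mu <= p.
Proof. move=> hb hm h. rewrite leNgt; apply/negP => H.
have h1 : 0 <= b * mu by apply: mulr_ge0 => //; lra.
have h2 : 0 < (mu - p - b * mu) * (mu - p + b*mu) by apply: mulr_gt0; lra.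
nra. Qed.

Lemma sq_abs (p mu b : R) : 0 <= b -> 0 < mu ->
  (p - mu)^+2 <= b^+2 * mu^+2 -> p <= (1 + b) * mu.
Proof. move=> hb hm h. rewrite leNgt; apply/negP => H.
have h1 : 0 <= b * mu by apply: mulr_ge0 => //; lra.
have h2 : 0 < (p - mu - b * mu) * (p - mu + b*mu) by apply: mulr_gt0; lra.
nra. Qed.

Lemma step_pos (x s dx ds K L L' : R) : 0 < x -> 0 < s ->
  s * dx + x * ds = K - x * s -> - L <= dx * ds -> L' <= x * s -> L' <= K ->
  0 <= L -> L < L' -> 0 < x + dx.
Proof.
move=> hx hs e ha hp hk hL hLL. rewrite ltNge; apply/negP => H.
have hdx : dx < 0 by lra.
have hdx' : dx != 0 by rewrite ltr0_neq0.
have hdx2 : 0 < - dx by rewrite oppr_gt0.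
set al := x / (- dx).
have hal0 : 0 < al by rewrite /al divr_gt0.
have hal1 : al <= 1.
  by rewrite /al ler_pdivrMr // mul1r; lra.
have e0 : x + al * dx = 0 by rewrite /al; field.
have E : (x + al * dx) * (s + al * ds) = x * s + al * (s * dx + x * ds) + al^+2 * (dx * ds) by ring.
rewrite e0 mul0r e in E.
have h3 : al^+2 * (dx * ds) >= - (al^+2 * L) by rewrite -mulrN ler_wpM2l // sqr_ge0.
have h4 : al ^+ 2 <= 1 by rewrite expr2; nra.
have h5 : al^+2 * L <= L by nra.
nra.
Qed.

Lemma single_le (I : finType) (f : I -> R) j : (forall i, 0 <= f i) -> f j <= \sum_i f i.
Proof. by move=> h; rewrite (bigD1 j) //= lerDl sumr_ge0. Qed.

Lemma sumsq_le (I : finType) (f : I -> R) : (forall i, 0 <= f i) ->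
  \sum_i f i ^+ 2 <= (\sum_i f i) ^+ 2.
Proof.
move=> h; rewrite [X in _ <= X]expr2 mulr_suml; apply: ler_sum => i _.
by rewrite expr2 ler_wpM2l // single_le.
Qed.

Lemma sum_delta (I : finType) (l : I) (w : R) : \sum_i (i == l)%:R * w = w.
Proof.
rewrite (bigD1 l) //= eqxx mul1r big1 ?addr0 // => i /negbTE ->; by rewrite mul0r.
Qed.

Theorem center (I : finType) (x s dx ds : I -> R) (l : I) (mu beta eta w : R) :
  (forall i, 0 < x i) -> (forall i, 0 < s i) -> 0 < mu ->
  \sum_i x i * s i = #|I|%:R * mu ->
  \sum_i (x i * s i - mu) ^+ 2 <= beta ^+ 2 * mu ^+ 2 ->
  0 <= beta -> beta <= 21/50 -> 0 <= eta -> eta <= beta ->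
  #|I|%:R * eta ^+ 2 = beta ^+ 2 ->
  (forall i, s i * dx i + x i * ds i = (1 - eta) * mu - x i * s i) ->
  \sum_i dx i * ds i = w -> 0 <= w ->
  (forall i, 0 < x i + dx i) /\
  \sum_i (dx i * ds i - (i == l)%:R * w) ^+ 2 <= beta ^+ 2 * ((1 - eta) * mu) ^+ 2.
Proof.
move=> hx hs hmu hsum hcen hb0 hb1 he0 he1 heta hN hw hw0.
pose p i := x i * s i.
pose a i := dx i * ds i.
pose h i := (1 - eta) * mu - p i.
have pl i : (1 - beta) * mu <= p i.
  apply: (sq_low _ _ _ hb0 hmu); apply: le_trans (hcen).
  rewrite /p; exact: (@single_le _ (fun i => (x i * s i - mu) ^+ 2) i (fun j => sqr_ge0 _)).
have hp i : 0 < p i by apply: mulr_gt0.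
have ha i : a i <= h i ^+ 2 / (4 * p i).
  rewrite ler_pdivlMr; last by apply: mulr_gt0 => //.
  rewrite /h -(hN i) /a /p.
  have := sqr_ge0 (s i * dx i - x i * ds i). nra.
have hsumh : \sum_i h i ^+ 2 <= 2 * beta ^+ 2 * mu ^+ 2.
  have -> : \sum_i h i ^+ 2 = \sum_i (x i * s i - mu) ^+ 2
       + \sum_i (2 * eta * mu) * (x i * s i - mu) + \sum_(i : I) (eta^+2 * mu^+2).
    rewrite -!big_split /=; apply: eq_bigr => i _; rewrite /h /p; ring.
  rewrite -mulr_sumr sumrB hsum sumr_const sumr_const.
  have cI : #|(xpredT : pred I)| = #|I| by apply: eq_card.
  rewrite cI.
  have -> : #|I|%:R * mu - mu *+ #|I| = 0 by rewrite mulr_natl subrr.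
  have e2 : eta ^+ 2 * mu ^+ 2 *+ #|I| = beta ^+ 2 * mu ^+ 2 by rewrite -heta mulr_natl mulrnAl.
  rewrite mulr0 addr0 e2; lra.
set P := 37/100 * beta * mu.
have P0 : 0 <= P by rewrite /P; apply: mulr_ge0; [apply: mulr_ge0 => //; lra | exact: ltW].
have hP : \sum_i posp (a i) <= P.
  apply: (@le_trans _ _ (\sum_i h i ^+ 2 / (4 * ((1 - beta) * mu)))).
    apply: ler_sum => i _; apply: posp_le2; last first.
      by apply: divr_ge0; [apply: sqr_ge0 | apply: mulr_ge0 => //; apply: mulr_ge0; lra].
    apply: le_trans (ha i) _; apply: ler_wpM2l; first exact: sqr_ge0.
    have q1 : 0 < 4 * ((1-beta)*mu) by apply: mulr_gt0 => //; apply: mulr_gt0 => //; lra.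
    have q2 : 0 < 4 * p i by apply: mulr_gt0.
    rewrite lef_pV2 ?posrE // ler_pM2l //; exact: pl.
  rewrite -mulr_suml ler_pdivrMr; last by apply: mulr_gt0 => //; apply: mulr_gt0 => //; lra.
  apply: le_trans (hsumh) _; rewrite /P.
  have : 0 <= beta * mu ^+ 2 by apply: mulr_ge0 => //; apply: sqr_ge0.
  rewrite expr2 => hh. nra.
have hlow i : - P <= a i.
  have e : a i = w - \sum_(j | j != i) a j.
    by rewrite -hw (bigD1 i) //= addrK.
  have hsP : \sum_(j | j != i) a j <= P.
    apply: le_trans (hP). apply: (@le_trans _ _ (\sum_(j | j != i) posp (a j))).
      by apply: ler_sum => j _; apply: posp_ge.
    rewrite [X in _ <= X](bigD1 i) //= lerDr; exact: posp_ge0.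
  rewrite e; lra.
split.
  move=> i; apply: (@step_pos (x i) (s i) (dx i) (ds i) ((1 - eta) * mu) P ((1 - beta) * mu) (hx i) (hs i) (hN i) (hlow i) (pl i)).
  - rewrite ler_pM2r //; lra.
  - exact: P0.
  - rewrite /P ltr_pM2r //; lra.
pose bb i := a i - (i == l)%:R * w.
have hbsum : \sum_i bb i = 0 by rewrite /bb sumrB sum_delta hw subrr.
have hbpos : \sum_i posp (bb i) <= P.
  apply: le_trans (hP); apply: ler_sum => i _; apply: posp_le.
  apply: le_trans (posp_ge _); rewrite /bb lerBlDr lerDl.
  by apply: mulr_ge0 => //; apply: ler0n.
have hneg : \sum_i posp (- bb i) = \sum_i posp (bb i).
  apply/eqP; rewrite -subr_eq0 -sumrB -oppr_eq0 -sumrN.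
  rewrite -[X in _ == X]hbsum; apply/eqP; apply: eq_bigr => i _.
  by rewrite [bb i in RHS]posp_split opprB.
have -> : \sum_i (dx i * ds i - (i == l)%:R * w) ^+ 2 =
   \sum_i posp (bb i) ^+ 2 + \sum_i posp (- bb i) ^+ 2.
  by rewrite -big_split; apply: eq_bigr => i _ /=; rewrite -(posp_sq (bb i)).
apply: le_trans (lerD (sumsq_le _ _ (fun i => posp_ge0 (bb i)))
                      (sumsq_le _ _ (fun i => posp_ge0 (- bb i)))) _.
rewrite hneg.
have h0 : 0 <= \sum_i posp (bb i) by apply: sumr_ge0 => i _; apply: posp_ge0.
have h1 : (\sum_i posp (bb i)) ^+ 2 <= P ^+ 2.
  by rewrite ler_sqr ?nnegrE.
apply: le_trans (lerD h1 h1) _.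
rewrite /P.
have : 58/100 * mu <= (1 - eta) * mu by rewrite ler_pM2r //; lra.
move=> hh.
have hh2 : (58/100 * mu) ^+ 2 <= ((1 - eta) * mu) ^+ 2.
  by rewrite ler_sqr ?nnegrE //; apply: mulr_ge0 => //; lra.
have hb2 : 0 <= beta ^+ 2 by apply: sqr_ge0.
have : beta ^+ 2 * (58 / 100 * mu) ^+ 2 <= beta ^+ 2 * ((1 - eta) * mu) ^+ 2.
  by rewrite ler_wpM2l.
move=> hh3. apply: le_trans hh3.
rewrite !exprMn. have hm2 : 0 <= mu ^+ 2 by apply: sqr_ge0.
nra.
Qed.

End Scal.

Set Implicit Arguments. Unset Strict Implicit. Unset Printing Implicit Defensive.

Section Dot.
Context {R : realType}.
Implicit Types (m : nat).

Lemma dotvE m (u v : 'cV[R]_m) : dotv u v = (u^T *m v) 0 0.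
Proof. by rewrite /dotv !mxE; apply: eq_bigr => i _; rewrite mxE. Qed.

Lemma dotvC m (u v : 'cV[R]_m) : dotv u v = dotv v u.
Proof. by rewrite /dotv; apply: eq_bigr => i _; rewrite mulrC. Qed.

Lemma dotvDl m (u v w : 'cV[R]_m) : dotv (u + v) w = dotv u w + dotv v w.
Proof. by rewrite /dotv -big_split; apply: eq_bigr => i _; rewrite mxE mulrDl. Qed.

Lemma dotvDr m (u v w : 'cV[R]_m) : dotv w (u + v) = dotv w u + dotv w v.
Proof. by rewrite dotvC dotvDl !(dotvC w). Qed.

Lemma dotvZl m a (u w : 'cV[R]_m) : dotv (a *: u) w = a * dotv u w.
Proof. by rewrite /dotv mulr_sumr; apply: eq_bigr => i _; rewrite mxE mulrA. Qed.

Lemma dotvZr m a (u w : 'cV[R]_m) : dotv w (a *: u) = a * dotv w u.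
Proof. by rewrite dotvC dotvZl dotvC. Qed.

Lemma dotvNl m (u w : 'cV[R]_m) : dotv (- u) w = - dotv u w.
Proof. by rewrite -scaleN1r dotvZl mulN1r. Qed.

Lemma dotvNr m (u w : 'cV[R]_m) : dotv w (- u) = - dotv w u.
Proof. by rewrite dotvC dotvNl dotvC. Qed.

Lemma dotvBl m (u v w : 'cV[R]_m) : dotv (u - v) w = dotv u w - dotv v w.
Proof. by rewrite dotvDl dotvNl. Qed.

Lemma dotvBr m (u v w : 'cV[R]_m) : dotv w (u - v) = dotv w u - dotv w v.
Proof. by rewrite dotvDr dotvNr. Qed.

Lemma dotv0r m (u : 'cV[R]_m) : dotv u 0 = 0.
Proof. by rewrite /dotv big1 // => i _; rewrite mxE mulr0. Qed.

Lemma dotv_mulmx m n (M : 'M[R]_(m, n)) (u : 'cV[R]_m) (v : 'cV[R]_n) : dotv u (M *m v) = dotv (M^T *m u) v.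
Proof. by rewrite !dotvE trmx_mul trmxK mulmxA. Qed.

Lemma dot_col m1 m2 (a1 b1 : 'cV[R]_m1) (a2 b2 : 'cV[R]_m2) :
  dotv (col_mx a1 a2) (col_mx b1 b2) = dotv a1 b1 + dotv a2 b2.
Proof.
rewrite /dotv big_split_ord /=; congr (_ + _); apply: eq_bigr => i _.
  by rewrite !col_mxEu.
by rewrite !col_mxEd.
Qed.

Lemma dot1 (a b : 'cV[R]_1) : dotv a b = a 0 0 * b 0 0.
Proof. by rewrite /dotv big_ord1. Qed.

Lemma sc_dot m (u v : 'cV[R]_m) : u^T *m v = (dotv u v)%:M.
Proof. by rewrite dotvE -mx11_scalar. Qed.

Lemma const1 (a : R) : const_mx a = a%:M :> 'cV[R]_1.
Proof. by apply/matrixP => i j; rewrite !ord1 !mxE. Qed.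

Lemma scM00 (a : R) : (a%:M : 'M[R]_1) 0 0 = a.
Proof. by rewrite mxE eqxx mulr1n. Qed.

Lemma mxDE m n (A B : 'M[R]_(m, n)) i j : (A + B) i j = A i j + B i j.
Proof. by rewrite mxE. Qed.
Lemma mxNE m n (A : 'M[R]_(m, n)) i j : (- A) i j = - A i j.
Proof. by rewrite mxE. Qed.
Lemma mxBE m n (A B : 'M[R]_(m, n)) i j : (A - B) i j = A i j - B i j.
Proof. by rewrite !mxE. Qed.
Lemma mxZE m n a (A : 'M[R]_(m, n)) i j : (a *: A) i j = a * A i j.
Proof. by rewrite mxE. Qed.
Lemma mx0E m n i j : (0 : 'M[R]_(m, n)) i j = 0.
Proof. by rewrite mxE. Qed.

End Dot.

Section Psi.
Context {R : realType} {nz nb : nat}.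
Variables (Q : 'M[R]_nz) (c : 'cV[R]_nz) (A : 'M[R]_(nb, nz)) (b : 'cV[R]_nb).
Local Notation nn := (nz + nb)%N.
Local Notation vec := 'cV[R]_(nn + 1).
Local Notation K := (Mp Q c A b).
Local Notation qq := (qp Q c A b).
Local Notation psi := (psi Q c A b).
Local Notation jac := (jac_psi Q c A b).

Lemma xb_split (xb : vec) : xb = col_mx (xpart xb) (tau xb)%:M.
Proof. by rewrite /xpart /tau -mx11_scalar vsubmxK. Qed.

Lemma vec_eq (u v : vec) : xpart u = xpart v -> tau u = tau v -> u = v.
Proof. by move=> h1 h2; rewrite (xb_split u) (xb_split v) h1 h2. Qed.

Lemma dot_split (u v : vec) : dotv u v = dotv (xpart u) (xpart v) + tau u * tau v.
Proof. by rewrite {1}(xb_split u) {1}(xb_split v) dot_col dot1 !scM00. Qed.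

Lemma xpartD (u v : vec) : xpart (u + v) = xpart u + xpart v.
Proof. by apply/matrixP => i j; rewrite !mxE. Qed.
Lemma tauD (u v : vec) : tau (u + v) = tau u + tau v.
Proof. by rewrite /tau !mxE. Qed.
Lemma xpartZ a (u : vec) : xpart (a *: u) = a *: xpart u.
Proof. by apply/matrixP => i j; rewrite !mxE. Qed.
Lemma tauZ a (u : vec) : tau (a *: u) = a * tau u.
Proof. by rewrite /tau !mxE. Qed.
Lemma xpartN (u : vec) : xpart (- u) = - xpart u.
Proof. by apply/matrixP => i j; rewrite !mxE. Qed.
Lemma tauN (u : vec) : tau (- u) = - tau u.
Proof. by rewrite /tau !mxE. Qed.

Lemma psi_x xb : xpart (psi xb) = K *m xpart xb + tau xb *: qq.
Proof. by rewrite /psi /= /xpart col_mxKu. Qed.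

Lemma psi_t xb : tau (psi xb) =
  - dotv (xpart xb) (K *m xpart xb) / tau xb - dotv (xpart xb) qq.
Proof. by rewrite {1}/psi /= {1}/tau col_mxKd mxE !dotvE mulmxA. Qed.

Lemma jac_x xb d : xpart (jac xb *m d) = K *m xpart d + tau d *: qq.
Proof. by rewrite {1}(xb_split d) /jac_psi /= mul_block_col /xpart col_mxKu mul_mx_scalar. Qed.

Lemma jac_t xb d : tau (jac xb *m d) =
  - (dotv (xpart xb) (K *m xpart d) + dotv (xpart d) (K *m xpart xb)) / tau xb
  - dotv qq (xpart d)
  + dotv (xpart xb) (K *m xpart xb) / tau xb ^+ 2 * tau d.
Proof.
rewrite {1}(xb_split d) /jac_psi /= mul_block_col {1}/tau col_mxKd mul_mx_scalar.
have e1 : (xpart xb)^T *m (K + K^T) *m xpart d =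
   (dotv (xpart xb) (K *m xpart d) + dotv (xpart d) (K *m xpart xb))%:M.
  rewrite mulmxDr mulmxDl -!mulmxA !sc_dot (dotv_mulmx K^T) trmxK (dotvC (K *m _)).
  by rewrite raddfD.
rewrite -[_ *m K *m xpart xb]mulmxA sc_dot scM00.
rewrite mulmxBl mulNmx -scalemxAl e1 sc_dot const1.
rewrite !mxE !eqxx !mulr1n.
ring.
Qed.

End Psi.

Section Core.
Context {R : realType} {nz nb : nat}.
Variables (Q : 'M[R]_nz) (c : 'cV[R]_nz) (A : 'M[R]_(nb, nz)) (b : 'cV[R]_nb).
Hypothesis hQ : forall z : 'cV[R]_nz, 0 <= (z^T *m Q *m z) 0 0.
Local Notation nn := (nz + nb)%N.
Local Notation vec := 'cV[R]_(nn + 1).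
Local Notation K := (Mp Q c A b).
Local Notation qq := (qp Q c A b).
Local Notation psi := (psi Q c A b).
Local Notation jac := (jac_psi Q c A b).
Local Notation qf v := (dotv v (K *m v)).
Local Notation el := (col_mx 0 1%:M : vec).

Lemma sigma_ge1 : 1 <= sigma Q c A b.
Proof. by rewrite /sigma !le_max lexx. Qed.

Lemma sigma_neq0 : sigma Q c A b != 0.
Proof. by rewrite lt0r_neq0 // (lt_le_trans ltr01 sigma_ge1). Qed.

Lemma xpart_el : xpart el = 0.
Proof. by rewrite /xpart col_mxKu. Qed.

Lemma tau_el : tau el = 1.
Proof. by rewrite /tau col_mxKd scM00. Qed.

Lemma F1 xb : tau xb != 0 -> dotv xb (psi xb) = 0.
Proof. move=> ht; rewrite dot_split psi_x psi_t dotvDr dotvZr; field; done. Qed.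

Lemma F2 xb d : tau xb != 0 -> dotv xb (jac xb *m d) = - dotv (psi xb) d.
Proof.
move=> ht; rewrite !dot_split jac_x jac_t psi_x psi_t dotvDr dotvZr dotvDl dotvZl.
rewrite (dotvC (K *m _) (xpart d)); field; done.
Qed.

Lemma F3 xb d : tau xb != 0 ->
  dotv d (jac xb *m d) = qf (xpart d - (tau d / tau xb) *: xpart xb).
Proof.
move=> ht; rewrite dot_split jac_x jac_t dotvDr dotvZr.
rewrite mulmxBr -scalemxAr dotvBl !dotvBr !dotvZl !dotvZr (dotvC (qvec c b)).
field; by rewrite ?ht ?htd ?sigma_neq0.
Qed.

Lemma F4 xb d : tau xb != 0 -> tau xb + tau d != 0 ->
  psi (xb + d) = psi xb + jac xb *m d
     - (qf (xpart d - (tau d / tau xb) *: xpart xb) / (tau xb + tau d)) *: el.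
Proof.
move=> ht htd; apply: vec_eq.
  rewrite !xpartD xpartN xpartZ xpart_el scaler0 subr0.
  rewrite !psi_x jac_x xpartD tauD mulmxDr scalerDl.
  by rewrite addrACA.
rewrite !tauD tauN tauZ tau_el mulr1.
rewrite !psi_t jac_t xpartD tauD.
rewrite mulmxBr -scalemxAr dotvBl !dotvBr !dotvZl !dotvZr.
rewrite mulmxDr !dotvDl !dotvDr.
rewrite (dotvC (qvec c b)).
set t := tau xb; set dl := tau d; set X1 := qf (xpart xb); set X2 := qf (xpart d).
set X3 := dotv (xpart xb) _; set X4 := dotv (xpart d) (K *m _); set Y1 := dotv (xpart xb) (qvec c b); set Y2 := dotv _ (qvec c b).
field; by rewrite ?ht ?htd ?sigma_neq0.
Qed.


Lemma Mmat_quad v : 0 <= dotv v (Mmat Q A *m v).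
Proof.
rewrite -[v]vsubmxK /Mmat mul_block_col dot_col mul0mx addr0 mulNmx.
rewrite dotvDr dotvNr (dotv_mulmx A^T) trmxK (dotvC (A *m _)) subrK.
by rewrite dotvE mulmxA; apply: hQ.
Qed.

Lemma qf_ge0 v : 0 <= qf v.
Proof.
rewrite /Mp -scalemxAl dotvZr; apply: mulr_ge0; last exact: Mmat_quad.
rewrite invr_ge0; apply: le_trans sigma_ge1; exact: ler01.
Qed.

Lemma newton_mul xb sb (a bb : vec) : newton_mat Q c A b xb sb *m col_mx a bb =
  col_mx (- (jac xb *m a) + bb) (diagc sb *m a + diagc xb *m bb).
Proof. by rewrite /newton_mat mul_block_col mulNmx mul1mx. Qed.

Lemma diagc_mul (u v : vec) i : (diagc u *m v) i 0 = u i 0 * v i 0.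
Proof. by rewrite /diagc mul_diag_mx !mxE. Qed.

Lemma tau_pos (xb : vec) : posv xb -> 0 < tau xb.
Proof. by move=> h; rewrite /tau mxE. Qed.

Lemma newton_ker (xb sb : vec) (v : 'cV[R]_((nn + 1) + (nn + 1))) : posv xb -> posv sb ->
  newton_mat Q c A b xb sb *m v = 0 -> v = 0.
Proof.
move=> hx hs; rewrite -[v]vsubmxK newton_mul => /eqP; rewrite col_mx_eq0.
move=> /andP[/eqP h1 /eqP h2].
set a := usubmx v; set bb := dsubmx v.
have ebb : bb = jac xb *m a by apply/eqP; rewrite -subr_eq0 addrC h1.
have hcomp i : sb i 0 * a i 0 + xb i 0 * bb i 0 = 0.
  by have := congr1 (fun M : vec => M i 0) h2; rewrite mxDE !diagc_mul mx0E.
have ht : tau xb != 0 by rewrite lt0r_neq0 // tau_pos.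
have hq : 0 <= dotv a bb by rewrite ebb F3 // qf_ge0.
have hterm i : a i 0 * bb i 0 = - (sb i 0 / xb i 0 * a i 0 ^+ 2).
  have hx0 : xb i 0 != 0 by rewrite lt0r_neq0.
  have e : bb i 0 = - (sb i 0 * a i 0) / xb i 0.
    by apply: (mulIf hx0); rewrite divfK //; have := hcomp i; lra.
  by rewrite e; field.
have hnn i : 0 <= sb i 0 / xb i 0 * a i 0 ^+ 2.
  by apply: mulr_ge0; [apply: divr_ge0; apply: ltW | apply: sqr_ge0].
have e : dotv a bb = - \sum_i (sb i 0 / xb i 0 * a i 0 ^+ 2).
  by rewrite /dotv -sumrN; apply: eq_bigr => i _; apply: hterm.
have hsum : \sum_i (sb i 0 / xb i 0 * a i 0 ^+ 2) = 0.
  apply/eqP; rewrite eq_le; apply/andP; split; last by apply: sumr_ge0 => i _; apply: hnn.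
  by rewrite -oppr_ge0 -e.
have ha i : a i 0 = 0.
  have := psumr_eq0P (fun i _ => hnn i) hsum (i := i) isT.
  move/eqP; rewrite mulf_eq0 sqrf_eq0 => /orP[|/eqP //].
  by rewrite mulf_eq0 invr_eq0 !(negbTE (lt0r_neq0 (hs _))) !(negbTE (lt0r_neq0 (hx _))).
have a0 : a = 0 by apply/matrixP => i j; rewrite ord1 ha mxE.
by rewrite ebb a0 mulmx0 col_mx0.
Qed.

Lemma newton_unit xb sb : posv xb -> posv sb ->
  newton_mat Q c A b xb sb \in unitmx.
Proof.
move=> hx hs; rewrite -unitmx_tr -row_free_unit -kermx_eq0.
apply/eqP/row_matrixP => i; rewrite row0.
apply: trmx_inj; rewrite trmx0; apply: (newton_ker hx hs).
set N := newton_mat _ _ _ _ _ _.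
have h : row i (kermx N^T) *m N^T = 0 by rewrite -row_mul mulmx_ker row0.
by have := congr1 trmx h; rewrite trmx_mul trmxK trmx0.
Qed.

End Core.

Section Gen.
Context {R : realType}.

Lemma enorm_le m (v : 'cV[R]_m) cc : 0 <= cc ->
  (enorm v <= cc) = (\sum_i v i 0 ^+ 2 <= cc ^+ 2).
Proof.
move=> hc; rewrite /enorm -{1}(ger0_norm hc) -sqrtr_sqr ler_sqrt //; exact: sqr_ge0.
Qed.

Lemma beta_bnd : 0 <= (betaA : R) /\ (betaA : R) <= 21/50.
Proof. rewrite /betaA; split; lra. Qed.

Lemma cen_entry m (x s : 'cV[R]_m) a i :
  (hadam x s - a *: onesv R m) i 0 = x i 0 * s i 0 - a.
Proof. by rewrite !mxE mulr1. Qed.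

End Gen.

Section Step.
Context {R : realType} {nz nb : nat}.
Variables (Q : 'M[R]_nz) (c : 'cV[R]_nz) (A : 'M[R]_(nb, nz)) (b : 'cV[R]_nb).
Hypothesis hQ : forall z : 'cV[R]_nz, 0 <= (z^T *m Q *m z) 0 0.
Local Notation nn := (nz + nb)%N.
Local Notation vec := 'cV[R]_(nn + 1).
Local Notation K := (Mp Q c A b).
Local Notation psi := (psi Q c A b).
Local Notation jac := (jac_psi Q c A b).
Local Notation el := (col_mx 0 1%:M : vec).
Local Notation lst := (rshift nn (@ord0 0)).
Variables (eta gamma : R).
Hypothesis heta : eta = betaA / Num.sqrt (nn + 1)%:R.
Hypothesis hgam : gamma = 1 - eta.

Definition cen (x s : vec) := enorm (hadam x s - mu x s *: onesv R (nn + 1)) <= betaA * mu x s.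

Lemma eta_facts : [/\ 0 <= eta, eta <= betaA & (nn + 1)%:R * eta ^+ 2 = betaA ^+ 2].
Proof.
have [hb0 hb1] := (@beta_bnd R).
have hn : 1 <= ((nn + 1)%:R : R) by rewrite ler1n addn1.
have hs : 1 <= Num.sqrt ((nn + 1)%:R : R).
  by rewrite -[X in X <= _]sqrtr1 ler_sqrt // (le_trans ler01 hn).
have hs0 : 0 < Num.sqrt ((nn + 1)%:R : R) by apply: lt_le_trans hs; exact: ltr01.
split.
- by rewrite heta divr_ge0 // ltW.
- by rewrite heta ler_pdivrMr // ler_peMr.
- rewrite heta expr_div_n sqr_sqrtr; last by apply: le_trans hn; exact: ler01.
  field; have : ((nn + 1)%:R : R) != 0 by rewrite pnatr_eq0 addn1.
  by rewrite !natrD.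
Qed.

Lemma el_entry i : el i 0 = (i == lst)%:R.
Proof.
rewrite -(splitK i); case: (split i) => j /=.
  by rewrite col_mxEu mxE eq_lrshift.
by rewrite col_mxEd ord1 eqxx scM00.
Qed.

Lemma mu_pos (x s : vec) : posv x -> posv s -> 0 < mu x s.
Proof.
move=> hx hs; rewrite /mu divr_gt0 ?ltr0n ?addn1 //.
apply: (lt_le_trans _ (@single_le _ _ (fun i => x i 0 * s i 0) lst _)).
  by apply: mulr_gt0.
by move=> i; apply: mulr_ge0; apply: ltW.
Qed.

Lemma dot_mu (x s : vec) : dotv x s = (nn + 1)%:R * mu x s.
Proof.
rewrite /mu; field; have : ((nn + 1)%:R : R) != 0 by rewrite pnatr_eq0 addn1.
by rewrite !natrD.
Qed.

Lemma step (xb sb : vec) : posv xb -> posv sb -> cen xb sb ->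
  let p := stepA Q c A b eta gamma (xb, sb) in
  [/\ posv p.1, posv p.2, cen p.1 p.2, dotv p.1 p.2 = gamma * dotv xb sb
    & resid Q c A b p.1 p.2 = gamma *: resid Q c A b xb sb].
Proof.
move=> hx hs hc /=.
have [he0 he1 heta2] := eta_facts.
have [hb0 hb1] := (@beta_bnd R).
set N := newton_mat Q c A b xb sb.
have hU : N \in unitmx by apply: newton_unit.
set sol := newton_sol Q c A b eta gamma xb sb.
have hsol : N *m sol = newton_rhs Q c A b eta gamma xb sb.
  by rewrite /sol /newton_sol mulmxA mulmxV // mul1mx.
rewrite /dxb -/sol.
set dx := usubmx sol; set ds := dsubmx sol.
set r := resid Q c A b xb sb.
set mu0 := mu xb sb.
move: hsol; rewrite -[sol]vsubmxK newton_mul /newton_rhs => /eq_col_mx[E1 E2].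
rewrite -/dx -/ds in E1 E2.
have eds : ds = jac xb *m dx - eta *: r.
  by have := congr1 (fun v => v + jac xb *m dx) E1; rewrite addrAC addNr add0r addrC.
have hN i : sb i 0 * dx i 0 + xb i 0 * ds i 0 = gamma * mu0 - xb i 0 * sb i 0.
  have := congr1 (fun M : vec => M i 0) E2.
  by rewrite mxDE !diagc_mul mxBE mxZE !mxE mulr1.
have ht : tau xb != 0 by rewrite lt0r_neq0 // tau_pos.
have hmu : 0 < mu0 by apply: mu_pos.
have hsumN : dotv dx sb + dotv xb ds = - eta * dotv xb sb.
  have : \sum_i (sb i 0 * dx i 0 + xb i 0 * ds i 0) = \sum_i (gamma * mu0 - xb i 0 * sb i 0).
    by apply: eq_bigr => i _; apply: hN.
  rewrite big_split sumrB sumr_const card_ord -/(dotv xb sb) /= => e.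
  rewrite /dotv (eq_bigr (fun i => sb i 0 * dx i 0)); last by move=> i _; rewrite mulrC.
  rewrite -/(dotv xb ds) e -mulr_natl -/(dotv xb sb) dot_mu /mu0 hgam; ring.
have hr0 : dotv dx r = 0.
  have h1 : dotv xb r = dotv xb sb by rewrite /r /resid dotvBr F1 // subr0.
  have h2 : dotv (psi xb) dx = - dotv xb (jac xb *m dx) by rewrite F2 // opprK.
  have h3 : jac xb *m dx = ds + eta *: r by rewrite eds subrK.
  rewrite /r /resid dotvBr (dotvC dx (psi xb)) h2 h3 dotvDr dotvZr.
  rewrite -/r h1; lra.
set w := dotv dx (jac xb *m dx).
have hw0 : 0 <= w by rewrite /w F3 //; apply: qf_ge0.
have hw : \sum_i dx i 0 * ds i 0 = w.
  by rewrite -/(dotv dx ds) eds dotvBr dotvZr hr0 mulr0 subr0.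
have hcen2 : \sum_i (xb i 0 * sb i 0 - mu0) ^+ 2 <= betaA ^+ 2 * mu0 ^+ 2.
  move: hc; rewrite /cen enorm_le; last by apply: mulr_ge0 => //; apply: ltW.
  by rewrite -exprMn; under eq_bigr => i _ do rewrite cen_entry.
have hS : \sum_i xb i 0 * sb i 0 = #|'I_(nn+1)|%:R * mu0 by rewrite card_ord -dot_mu.
have hE : #|'I_(nn+1)|%:R * eta^+2 = betaA^+2 :> R by rewrite card_ord.
have hN' i : sb i 0 * dx i 0 + xb i 0 * ds i 0 = (1 - eta) * mu0 - xb i 0 * sb i 0.
  by rewrite -hgam; apply: hN.
have [hpos hbnd] := @center R _ (fun i => xb i 0) (fun i => sb i 0) (fun i => dx i 0)
   (fun i => ds i 0) lst mu0 betaA eta w hx hs hmu hS hcen2 hb0 hb1 he0 he1 hE hN' hw hw0.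
rewrite -hgam in hbnd.
have hxn : posv (xb + dx) by move=> i; rewrite mxDE; apply: hpos.
have htn : tau xb + tau dx != 0 by rewrite -tauD lt0r_neq0 // tau_pos.
set cc := w / (tau xb + tau dx).
have esn : psi (xb + dx) + gamma *: r = sb + ds - cc *: el.
  rewrite F4 // -F3 // -/w -/cc eds /r /resid hgam.
  set P := psi xb; set Jd := jac xb *m dx.
  apply/matrixP => i j; rewrite !(mxDE, mxNE, mxZE); ring.
have hresid : resid Q c A b (xb + dx) (psi (xb + dx) + gamma *: r) = gamma *: r.
  by rewrite /resid addrAC subrr add0r.
set sn := psi (xb + dx) + gamma *: r.
have etl : xb lst 0 + dx lst 0 = tau xb + tau dx by rewrite /tau !mxE.
have hentry i : (hadam (xb + dx) sn) i 0 = gamma * mu0 + (dx i 0 * ds i 0 - (i == lst)%:R * w).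
  rewrite /sn esn mxE !(mxDE, mxNE, mxZE) el_entry.
  have := hN i; case: eqP => [->|_] hNi.
    have e1 : (xb lst 0 + dx lst 0) * (w / (tau xb + tau dx)) = w by rewrite etl mulrC divfK.
    rewrite mulr1 mul1r mulrBr /cc e1; lra.
  rewrite mulr0 mul0r subr0 subr0; lra.
have dot_had (u v : vec) : dotv u v = \sum_i (hadam u v) i 0.
  by rewrite /dotv; apply: eq_bigr => i _; rewrite mxE.
have hdot : dotv (xb + dx) sn = gamma * dotv xb sb.
  rewrite dot_had (eq_bigr _ (fun i _ => hentry i)) big_split /= sumrB hw sum_delta subrr addr0.
  by rewrite sumr_const card_ord -mulr_natl dot_mu /mu0 mulrCA.
have hmu' : mu (xb + dx) sn = gamma * mu0.
  rewrite /mu hdot /mu0 /mu; by rewrite mulrA.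
have hgp : 0 < gamma * mu0 by apply: mulr_gt0 => //; rewrite hgam; lra.
have hcen' : \sum_i ((hadam (xb + dx) sn) i 0 - mu (xb + dx) sn) ^+ 2 <= (betaA * mu (xb + dx) sn) ^+ 2.
  rewrite hmu' exprMn; apply: le_trans hbnd; apply: ler_sum => i _.
  by rewrite hentry addrAC subrr add0r.
split => //.
- move=> i.
  have : (hadam (xb + dx) sn i 0 - gamma * mu0) ^+ 2 <= betaA ^+ 2 * (gamma * mu0) ^+ 2.
    apply: le_trans hbnd; rewrite hentry addrAC subrr add0r.
    exact: (@single_le _ _ (fun i => (dx i 0 * ds i 0 - (i == lst)%:R * w) ^+ 2) i (fun j => sqr_ge0 _)).
  move/(sq_low _ _ _ hb0 hgp) => hh.
  have hp : 0 < hadam (xb + dx) sn i 0.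
    by apply: lt_le_trans hh; apply: mulr_gt0 => //; lra.
  by move: hp; rewrite mxE (pmulr_rgt0 _ (hxn i)).
- rewrite /cen enorm_le; last by apply: mulr_ge0 => //; rewrite hmu'; apply: ltW.
  under eq_bigr => i _ do rewrite cen_entry.
  apply: le_trans hcen'; apply: ler_sum => i _; by rewrite [hadam _ _ i 0]mxE.
Qed.

End Step.

Section Final.
Context {R : realType} {nz nb : nat}.
Variables (Q : 'M[R]_nz) (c : 'cV[R]_nz) (A : 'M[R]_(nb, nz)) (b : 'cV[R]_nb).
Hypothesis hQ : forall z : 'cV[R]_nz, 0 <= (z^T *m Q *m z) 0 0.
Local Notation nn := (nz + nb)%N.
Local Notation vec := 'cV[R]_(nn + 1).
Local Notation e := (onesv R (nn + 1)).
Local Notation lst := (rshift nn (@ord0 0)).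

Lemma enormZ m a (v : 'cV[R]_m) : 0 <= a -> enorm (a *: v) = a * enorm v.
Proof.
move=> ha; rewrite /enorm; under eq_bigr => i _ do rewrite mxE exprMn.
by rewrite -mulr_sumr sqrtrM ?sqr_ge0 // sqrtr_sqr ger0_norm.
Qed.

Lemma onesv_pos m : posv (onesv R m).
Proof. by move=> i; rewrite mxE ltr01. Qed.

Lemma dot_ones m : dotv (onesv R m) (onesv R m) = m%:R.
Proof.
rewrite /dotv; under eq_bigr => i _ do rewrite mxE mulr1.
by rewrite sumr_const card_ord.
Qed.

Lemma tau_ones : tau e = 1.
Proof. by rewrite /tau !mxE. Qed.

Lemma xpart_ones : xpart e = onesv R nn.
Proof. by apply/matrixP => i j; rewrite !mxE. Qed.

Lemma r0_nonneg i : 0 <= (resid Q c A b e e) i 0.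
Proof.
have hs1 := sigma_ge1 Q c A b.
have hs0 : 0 < sigma Q c A b by apply: lt_le_trans hs1; exact: ltr01.
rewrite /resid mxBE -(splitK i); case: (split i) => j /=.
  have -> : psi Q c A b e (lshift 1 j) 0 = xpart (psi Q c A b e) j 0.
    by rewrite -{1}[psi Q c A b e]vsubmxK col_mxEu.
  rewrite psi_x xpart_ones tau_ones scale1r /Mp /qp -scalemxAl -scalerDr mxZE mxE.
  set t := (Mmat Q A *m onesv R nn + qvec c b) j 0.
  have hle : t <= sigma Q c A b.
    rewrite /sigma le_max; apply/orP; left; rewrite le_max; apply/orP; right.
    exact: (le_bigmax 0 (fun i => (Mmat Q A *m onesv R nn + qvec c b) i 0) j).
  have : t / sigma Q c A b <= 1 by rewrite ler_pdivrMr // mul1r.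
  rewrite mulrC; lra.
have -> : psi Q c A b e (rshift nn j) 0 = tau (psi Q c A b e).
  by rewrite -{1}[psi Q c A b e]vsubmxK col_mxEd ord1.
rewrite psi_t xpart_ones tau_ones divr1 /Mp /qp -scalemxAl !dotvZr mxE.
set a1 := dotv _ (Mmat Q A *m _); set q1 := dotv _ (qvec c b).
have hle : - a1 - q1 <= sigma Q c A b by rewrite /sigma le_max lexx orbT.
have -> : 1 - (- ((sigma Q c A b)^-1 * a1) - (sigma Q c A b)^-1 * q1) =
   (sigma Q c A b)^-1 * (sigma Q c A b + a1 + q1).
  by field; rewrite lt0r_neq0.
apply: mulr_ge0; first by rewrite invr_ge0 ltW.
lra.
Qed.

Lemma r0_bound : enorm (resid Q c A b e e) <= (nn + 1)%:R.
Proof.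
rewrite enorm_le ?ler0n //.
apply: le_trans (sumsq_le _ _ r0_nonneg) _.
have hF : dotv e (psi Q c A b e) = 0 by apply: F1; rewrite tau_ones oner_neq0.
have -> : \sum_i resid Q c A b e e i 0 = dotv e (resid Q c A b e e).
  by rewrite /dotv; apply: eq_bigr => i _; rewrite [e i 0]mxE mul1r.
by rewrite /resid dotvBr hF subr0 dot_ones.
Qed.

Variables (eta gamma : R).
Hypothesis heta : eta = betaA / Num.sqrt (nn + 1)%:R.
Hypothesis hgam : gamma = 1 - eta.

Lemma inv k :
  [/\ posv (xk Q c A b eta gamma k), posv (sk Q c A b eta gamma k),
      cen (xk Q c A b eta gamma k) (sk Q c A b eta gamma k),
      rk Q c A b eta gamma k = gamma ^+ k *: rk Q c A b eta gamma 0
    & dotv (xk Q c A b eta gamma k) (sk Q c A b eta gamma k) = gamma ^+ k * (nn + 1)%:R].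
Proof.
elim: k => [|k [h1 h2 h3 h4 h5]].
  rewrite /xk /sk /iterA /= expr0 scale1r mul1r dot_ones.
  split => //; try exact: onesv_pos.
  rewrite /cen enorm_le; last by apply: mulr_ge0; [case: (@beta_bnd R) | rewrite /mu dot_ones divff ?ler01 // pnatr_eq0 addn1].
  have hm : mu e e = 1 by rewrite /mu dot_ones divff // pnatr_eq0 addn1.
  rewrite hm; under eq_bigr => i _ do rewrite cen_entry !mxE mulr1 subrr expr0n.
  by rewrite big1 // mulr1 sqr_ge0.
have E : iterA Q c A b eta gamma k.+1 =
   stepA Q c A b eta gamma (xk Q c A b eta gamma k, sk Q c A b eta gamma k).
  by rewrite /xk /sk /iterA iterS -surjective_pairing.
have := @step _ _ _ Q c A b hQ eta gamma heta hgam _ _ h1 h2 h3.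
move=> /= [g1 g2 g3 g4 g5].
have ex : xk Q c A b eta gamma k.+1 = (stepA Q c A b eta gamma (xk Q c A b eta gamma k, sk Q c A b eta gamma k)).1 by rewrite /xk E.
have es : sk Q c A b eta gamma k.+1 = (stepA Q c A b eta gamma (xk Q c A b eta gamma k, sk Q c A b eta gamma k)).2 by rewrite /sk E.
move: h4; rewrite /rk ex es /= => h4.
split => //.
  by rewrite g5 h4 scalerA -exprS.
by rewrite g4 h5 mulrA -exprS.
Qed.

End Final.

Lemma niter_bound (R : realType) (n : nat) (eps : R) : 0 < eps -> eps <= (n + 1)%:R ->
  (1 - betaA / Num.sqrt (n + 1)%:R) ^+ (Niter n eps) * (n + 1)%:R <= eps.
Proof.
move=> he hen.
have [hb0 hb1] := (@beta_bnd R).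
have hbp : 0 < (betaA : R) by rewrite /betaA; lra.
have hn : 1 <= ((n + 1)%:R : R) by rewrite ler1n addn1.
have hn0 : 0 < ((n + 1)%:R : R) by apply: lt_le_trans hn; exact: ltr01.
have hs1 : 1 <= Num.sqrt ((n + 1)%:R : R).
  by rewrite -[X in X <= _]sqrtr1 ler_sqrt // (le_trans ler01 hn).
have hs0 : 0 < Num.sqrt ((n + 1)%:R : R) by apply: lt_le_trans hs1; exact: ltr01.
set s := Num.sqrt _ in hs1 hs0 *.
have he0 : 0 < betaA / s by apply: divr_gt0.
have he1 : betaA / s <= betaA by rewrite ler_pdivrMr // ler_peMr // ltW.
set g := 1 - betaA / s.
have hg0 : 0 < g by rewrite /g; lra.
have hg1 : g < 1 by rewrite /g; lra.
have hl : ln g < 0 by apply: ln_lt0; rewrite hg0 hg1.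
set L := ln ((n + 1)%:R / eps).
have hL : 0 <= L by apply: ln_ge0; rewrite ler_pdivlMr // mul1r.
have hq : 0 <= L / - ln g by apply: divr_ge0 => //; rewrite oppr_ge0 ltW.
have hz : 0 <= Num.ceil (L / - ln g) by rewrite ceil_ge0; lra.
have hN : L / - ln g <= (Niter n eps)%:R.
  rewrite /Niter -/s -/g -/L natr_absz ger0_norm //; exact: ceil_ge.
rewrite -ler_pdivlMr // -ler_ln ?posrE ?exprn_gt0 ?divr_gt0 //.
rewrite lnXn // ln_div ?posrE // -[ln g *+ _]mulr_natl.
have : L <= (Niter n eps)%:R * - ln g by rewrite -ler_pdivrMr // oppr_gt0.
rewrite /L ln_div ?posrE //; lra.
Qed.

Lemma g_nonneg (R : realType) (e : R) : e <= betaA -> 0 <= 1 - e.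
Proof. have [hb0 hb1] := (@beta_bnd R); move=> h; lra. Qed.

Theorem theorem1 (R : realType) (nz nb : nat)
  (Q : 'M[R]_nz) (c : 'cV[R]_nz) (A : 'M[R]_(nb, nz)) (b : 'cV[R]_nb)
  (eps : R) :
  (1 <= nz + nb)%N ->
  Q^T = Q ->
  (forall z : 'cV[R]_nz, 0 <= (z^T *m Q *m z) 0 0) ->
  0 < eps -> eps <= (nz + nb + 1)%:R ->
  let n := (nz + nb)%N in
  let eta : R := betaA / Num.sqrt (n + 1)%:R in
  let gamma : R := 1 - eta in
  let N := Niter n eps in
  (forall k, (k <= N)%N ->
     ((k < N)%N ->
        newton_mat Q c A b (xk Q c A b eta gamma k) (sk Q c A b eta gamma k)
          \in unitmx)
     /\ posv (xk Q c A b eta gamma k)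
     /\ posv (sk Q c A b eta gamma k)
     /\ enorm (hadam (xk Q c A b eta gamma k) (sk Q c A b eta gamma k)
               - muk Q c A b eta gamma k *: onesv R (n + 1))
          <= betaA * muk Q c A b eta gamma k
     /\ rk Q c A b eta gamma k = (1 - eta) ^+ k *: rk Q c A b eta gamma 0
     /\ dotv (xk Q c A b eta gamma k) (sk Q c A b eta gamma k)
          = (1 - eta) ^+ k * (n + 1)%:R)
  /\ enorm (rk Q c A b eta gamma N) <= eps
  /\ dotv (xk Q c A b eta gamma N) (sk Q c A b eta gamma N) <= eps.
Proof.
move=> _ _ hQ he hen n eta gamma N.
have heta : eta = betaA / Num.sqrt (nz + nb + 1)%:R by [].
have hgam : gamma = 1 - eta by [].
have hinv := @inv _ _ _ Q c A b hQ eta gamma heta hgam.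
have hgN : gamma ^+ N * (n + 1)%:R <= eps by apply: niter_bound.
have hg0 : 0 <= gamma.
  have [hb0 hb1] := (@beta_bnd R).
  have [he0 he1 _] := @eta_facts R nz nb eta heta.
  exact: (g_nonneg he1).
split.
  move=> k _; have [h1 h2 h3 h4 h5] := hinv k.
  split; first by move=> _; exact: (@newton_unit _ _ _ Q c A b hQ _ _ h1 h2).
  exact: (conj h1 (conj h2 (conj h3 (conj h4 h5)))).
have [h1 h2 h3 h4 h5] := hinv N.
split; last by rewrite h5.
rewrite h4 enormZ ?exprn_ge0 //.
apply: le_trans hgN; apply: ler_wpM2l; first exact: exprn_ge0.
exact: r0_bound.
Qed.
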